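(* Let $b,c\in Z^{10}$ with $\sum_i b_i=\sum_i c_i=0$, and assume $t\nmid B_i$, $t\nmid C_i$, $t\nmid B_i+B_{i+2}$ and $t\nmid C_i+C_{i+2}$ for all odd $i$ (indices mod $10$). Then $\mathbb{M}(b)\cong\mathbb{M}(c)$ as $B_{5,10}$-modules if and only if both $$t\mid C_1B_3(C_5+C_7)B_9-B_1C_3(B_5+B_7)C_9\quad\text{and}\quad t\mid C_1B_3C_5(B_7+B_9)-B_1C_3B_5(C_7+C_9).$$
   Context: Let $Z=\mathbb{C}[[t]]$. Let $\Gamma_{10}$ be the quiver with vertices $0,1,\dots,9$ (indices taken mod $10$) on a cycle and arrows $x_i\colon i-1\to i$, $y_i\colon i\to i-1$ for $i=1,\dots,10$. Let $B_{5,10}$ be the completed path algebra of $\Gamma_{10}$ modulo the closed ideal generated by $xy=yx$ and $x^5=y^5$ at every vertex. For $b=(b_1,\dots,b_{10})\in Z^{10}$ with $\sum_i b_i=0$, the $B_{5,10}$-module $\mathbb{M}(b)$ has $V_i=Z\oplus Z$ at every vertex, and for odd $j$: $x_j=\begin{pmatrix} t& b_j\\ 0&1\end{pmatrix}$, $y_j=\begin{pmatrix} 1&-b_j\\0&t\end{pmatrix}$; for even $j$: $x_j=\begin{pmatrix}1&b_j\\0&t\end{pmatrix}$, $y_j=\begin{pmatrix}t&-b_j\\0&1\end{pmatrix}$. An isomorphism $\mathbb{M}(b)\to\mathbb{M}(c)$ is a family of invertible $Z$-linear maps $\varphi_i\colon Z^2\to Z^2$ commuting with all $x_i$ and $y_i$.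 For odd $i$ write $B_i=b_i+b_{i+1}$ and $C_i=c_i+c_{i+1}$ (indices mod $10$). *)

(* Defs.v *)
From HB Require Import structures.
From mathcomp Require Import all_boot all_order all_algebra.
From mathcomp Require Import Rstruct complex.
Set Implicit Arguments. Unset Strict Implicit. Unset Printing Implicit Defensive.
Import Order.TTheory GRing.Theory Num.Theory.
Local Open Scope ring_scope.

Definition CC : fieldType := (Rdefinitions.R)[i].

(* Z = C[[t]]: formal power series, given by their coefficient sequences. *)
Definition fps := nat -> CC.

Definition fadd (a b : fps) : fps := fun n => a n + b n.
Definition fopp (a : fps) : fps := fun n => - a n.
Definition fmul (a b : fps) : fps :=
  fun n => \sum_(i < n.+1) a i * b (n - i)%N.
Definition fone : fps := fun n => (n == 0%N)%:R.
Definition fzero : fps := fun _ => 0.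
Definition ft : fps := fun n => (n == 1%N)%:R.

Definition feq (a b : fps) : Prop := forall n, a n = b n.

Definition tdvd (a : fps) : Prop := exists q : fps, feq a (fmul ft q).

(* 2x2 matrices over Z, acting on column vectors Z^2 *)
Record mat2 := Mat2 { m11 : fps; m12 : fps; m21 : fps; m22 : fps }.

Definition mmul (A B : mat2) : mat2 :=
  Mat2 (fadd (fmul (m11 A) (m11 B)) (fmul (m12 A) (m21 B)))
       (fadd (fmul (m11 A) (m12 B)) (fmul (m12 A) (m22 B)))
       (fadd (fmul (m21 A) (m11 B)) (fmul (m22 A) (m21 B)))
       (fadd (fmul (m21 A) (m12 B)) (fmul (m22 A) (m22 B))).

Definition meq (A B : mat2) : Prop :=
  [/\ feq (m11 A) (m11 B), feq (m12 A) (m12 B),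
      feq (m21 A) (m21 B) & feq (m22 A) (m22 B)].

Definition mid : mat2 := Mat2 fone fzero fzero fone.

Definition minvertible (A : mat2) : Prop :=
  exists B : mat2, meq (mmul A B) mid /\ meq (mmul B A) mid.

(* Indices mod 10: an element j : 'I_10 represents the arrow index
   j (for j = 1..9) or 10 (for j = 0); vertices are 0..9.
   The arrow x_j goes from vertex j-1 (= ord_pred j) to vertex j,
   y_j goes from vertex j to vertex j-1.  Parity of j mod 10 = parity of j. *)

Definition xmat (b : 'I_10 -> fps) (j : 'I_10) : mat2 :=
  if odd j then Mat2 ft (b j) fzero fone
  else Mat2 fone (b j) fzero ft.

Definition ymat (b : 'I_10 -> fps) (j : 'I_10) : mat2 :=
  if odd j then Mat2 fone (fopp (b j)) fzero ft
  else Mat2 ft (fopp (b j)) fzero fone.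

Definition sum_zero (b : 'I_10 -> fps) : Prop :=
  forall n, \sum_(i < 10) b i n = 0.

(* An isomorphism M(b) -> M(c) of B_{5,10}-modules: a family of invertible
   Z-linear maps phi_i : V_i -> V_i (vertices i) commuting with all x_j, y_j. *)
Definition Miso (b c : 'I_10 -> fps) : Prop :=
  exists phi : 'I_10 -> mat2,
    (forall i, minvertible (phi i)) /\
    (forall j : 'I_10,
        meq (mmul (phi j) (xmat b j)) (mmul (xmat c j) (phi (ord_pred j))) /\
        meq (mmul (phi (ord_pred j)) (ymat b j)) (mmul (ymat c j) (phi j))).

(* B_i = b_i + b_{i+1} (indices mod 10), used for odd i *)
Definition Bsum (b : 'I_10 -> fps) (i : 'I_10) : fps := fadd (b i) (b (ordS i)).

Definition ix (k : nat) : 'I_10 := inZp k.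

(* Main.v *)
Require Import Defs.
From mathcomp Require Import all_boot all_order all_algebra.
From Stdlib Require Import FunctionalExtensionality Ring.
Set Implicit Arguments. Unset Strict Implicit. Unset Printing Implicit Defensive.
Import Order.TTheory GRing.Theory Num.Theory.
Local Open Scope ring_scope.

Lemma feqE (a b : fps) : feq a b -> a = b.
Proof. by move=> h; apply: functional_extensionality. Qed.

Definition fsub (a b : fps) : fps := fadd a (fopp b).
Definition T (N : nat) (a : fps) : {poly CC} := \poly_(i < N) a i.

Lemma fmul_T (a b : fps) N n : (n < N)%N -> fmul a b n = (T N a * T N b)`_n.
Proof.
move=> hn; rewrite coefM /fmul; apply: eq_bigr => i _.
rewrite !coef_poly.
have h1 : (i < N)%N by apply: leq_ltn_trans hn; rewrite -ltnS.
have h2 : (n - i < N)%N by apply: leq_ltn_trans hn; apply: leq_subr.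
by rewrite h1 h2.
Qed.

Lemma fmulC a b : fmul a b = fmul b a.
Proof. apply: feqE => n; by rewrite (fmul_T a b (ltnSn n)) (fmul_T b a (ltnSn n)) mulrC. Qed.

Lemma fmulA a b c : fmul a (fmul b c) = fmul (fmul a b) c.
Proof.
apply: feqE => n.
have e1 : fmul a (fmul b c) n = (T n.+1 a * (T n.+1 b * T n.+1 c))`_n.
  rewrite /fmul coefM; apply: eq_bigr => i _.
  have h2 : (n - i < n.+1)%N by rewrite ltnS leq_subr.
  rewrite coef_poly ltn_ord; congr (_ * _).
  exact: (fmul_T b c h2).
have e2 : fmul (fmul a b) c n = (T n.+1 a * T n.+1 b * T n.+1 c)`_n.
  rewrite /fmul coefM; apply: eq_bigr => i _.
  have h2 : (n - i < n.+1)%N by rewrite ltnS leq_subr.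
  rewrite coef_poly h2; congr (_ * _).
  exact: (fmul_T a b (ltn_ord i)).
by rewrite e1 e2 mulrA.
Qed.

Lemma fmulDl a b c : fmul (fadd a b) c = fadd (fmul a c) (fmul b c).
Proof. apply: feqE => n; rewrite /fmul /fadd -big_split /=; apply: eq_bigr => i _; by rewrite mulrDl. Qed.

Lemma fmul1 a : fmul fone a = a.
Proof.
apply: feqE => n; rewrite /fmul big_ord_recl big1 => [|i _].
  by rewrite addr0 /fone /= mul1r subn0.
by rewrite /fone /= mul0r.
Qed.

Lemma fps_rt : ring_theory fzero fone fadd fmul fsub fopp (@eq fps).
Proof.
constructor.
- by move=> x; apply: feqE => n; rewrite /fadd /fzero add0r.
- by move=> x y; apply: feqE => n; rewrite /fadd addrC.
- by move=> x y z; apply: feqE => n; rewrite /fadd addrA.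
- exact: fmul1.
- exact: fmulC.
- exact: fmulA.
- exact: fmulDl.
- by [].
- by move=> x; apply: feqE => n; rewrite /fadd /fopp /fzero subrr.
Qed.

Add Ring fpsRing : fps_rt.

Ltac fring := ring.
From mathcomp Require Import Rstruct complex ring.


Definition fc (a : CC) : fps := fun n => (n == 0%N)%:R * a.

Lemma fcM a b : fmul (fc a) (fc b) = fc (a * b).
Proof.
apply: feqE => n; rewrite /fmul big_ord_recl big1 => [|i _].
  by rewrite addr0 /fc /= subn0 mul1r mulrCA.
by rewrite /fc /= !mul0r.
Qed.
Lemma fcD a b : fadd (fc a) (fc b) = fc (a + b).
Proof. by apply: feqE => n; rewrite /fadd /fc mulrDr. Qed.
Lemma fcN a : fopp (fc a) = fc (- a).
Proof. by apply: feqE => n; rewrite /fopp /fc mulrN. Qed.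
Lemma fc1 : fc 1 = fone.
Proof. by apply: feqE => n; rewrite /fc mulr1. Qed.
Lemma fc0 : fc 0 = fzero.
Proof. by apply: feqE => n; rewrite /fc mulr0. Qed.

Lemma fmul0 a b : fmul a b 0%N = a 0%N * b 0%N.
Proof. by rewrite /fmul big_ord1 subn0. Qed.
Lemma fadd0 a b : fadd a b 0%N = a 0%N + b 0%N.
Proof. by []. Qed.
Lemma fopp0 a : fopp a 0%N = - a 0%N.
Proof. by []. Qed.
Lemma fsub0 a b : fsub a b 0%N = a 0%N - b 0%N.
Proof. by []. Qed.
Lemma ft0 : ft 0%N = 0.
Proof. by []. Qed.
Lemma fone0 : fone 0%N = 1.
Proof. by []. Qed.
Lemma fzero0 : fzero 0%N = 0.
Proof. by []. Qed.
Lemma fc0' a : fc a 0%N = a.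
Proof. by rewrite /fc mul1r. Qed.

Lemma ftS a n : fmul ft a n.+1 = a n.
Proof.
rewrite /fmul big_ord_recl big_ord_recl big1 => [|i _].
  by rewrite /ft /= !mul0r !add0r addr0 mul1r subSS subn0.
by rewrite /ft /= mul0r.
Qed.
Lemma ft_0 a : fmul ft a 0%N = 0.
Proof. by rewrite fmul0 ft0 mul0r. Qed.

Lemma tdvdP a : tdvd a <-> a 0%N = 0.
Proof.
split.
  by case=> q h; rewrite h ft_0.
move=> h; exists (fun n => a n.+1) => -[|n].
  by rewrite ft_0.
by rewrite ftS.
Qed.

Definition fdivt (a : fps) : fps := fun n => a n.+1.
Lemma fdivtK a : a 0%N = 0 -> fmul ft (fdivt a) = a.
Proof. by move=> h; apply: feqE => -[|n]; rewrite ?ft_0 ?ftS. Qed.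

Lemma ft_inj a b : fmul ft a = fmul ft b -> a = b.
Proof. by move=> h; apply: feqE => n; rewrite -(ftS a) -(ftS b) h. Qed.

Lemma sum10 (f : 'I_10 -> CC) : \sum_(i < 10) f i =
  f (ix 0) + f (ix 1) + f (ix 2) + f (ix 3) + f (ix 4) + f (ix 5) + f (ix 6) + f (ix 7) + f (ix 8) + f (ix 9).
Proof.
have -> : \sum_(i < 10) f i = \sum_(i < 10) f (ix i).
  by apply: eq_bigr => i _; congr f; apply: val_inj; rewrite /= modn_small.
rewrite -(big_mkord xpredT (fun i => f (ix i))).
rewrite !big_nat_recr // big_geq //.
rewrite [in LHS]/= add0r.
reflexivity.
Qed.


Lemma eqfeq (a b : fps) : a = b -> feq a b.
Proof. by move->. Qed.

Definition Xm (par : bool) (b : fps) : mat2 :=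
  if par then Mat2 ft b fzero fone else Mat2 fone b fzero ft.
Definition Ym (par : bool) (b : fps) : mat2 :=
  if par then Mat2 fone (fopp b) fzero ft else Mat2 ft (fopp b) fzero fone.

Lemma xmatE b j : xmat b j = Xm (odd j) (b j).
Proof. by []. Qed.
Lemma ymatE b j : ymat b j = Ym (odd j) (b j).
Proof. by []. Qed.

Definition arrow (A' A : mat2) (b c : fps) (par : bool) :=
  meq (mmul A (Xm par b)) (mmul (Xm par c) A') /\
  meq (mmul A' (Ym par b)) (mmul (Ym par c) A).

Lemma arrow_odd p q r s p' q' r' s' b c :
  arrow (Mat2 p' q' r' s') (Mat2 p q r s) b c true <->
  [/\ r' = fmul ft r, s' = fadd (fmul r b) s, p' = fsub p (fmul c r)
    & q = fsub (fadd (fmul ft q') (fmul c s')) (fmul b p)].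
Proof.
split.
  rewrite /arrow /meq /mmul /Xm /Ym /=.
  case=> -[x11 x12 x21 x22] [y11 y12 y21 y22].
  move: x11 x12 x21 x22 y11 y12 y21 y22.
  move=> /feqE x11 /feqE x12 /feqE x21 /feqE x22 /feqE y11 /feqE y12 /feqE y21 /feqE y22.
  split.
  - by transitivity (fadd (fmul fzero p') (fmul fone r')); [fring | rewrite -x21; fring].
  - by transitivity (fadd (fmul fzero q') (fmul fone s')); [fring | rewrite -x22; fring].
  - by transitivity (fadd (fmul p' fone) (fmul q' fzero)); [fring | rewrite y11; fring].
  - by rewrite -x12; fring.
case=> -> -> -> ->.
rewrite /arrow /meq /mmul /Xm /Ym /=.
by split; split; apply: eqfeq; fring.
Qed.

Lemma arrow_even p q r s p' q' r' s' b c :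
  arrow (Mat2 p' q' r' s') (Mat2 p q r s) b c false <->
  [/\ r = fmul ft r', s = fsub s' (fmul r' b), p = fadd p' (fmul c r')
    & q' = fsub (fadd (fmul p b) (fmul ft q)) (fmul c s')].
Proof.
split.
  rewrite /arrow /meq /mmul /Xm /Ym /=.
  case=> -[x11 x12 x21 x22] [y11 y12 y21 y22].
  move: x11 x12 x21 x22 y11 y12 y21 y22.
  move=> /feqE x11 /feqE x12 /feqE x21 /feqE x22 /feqE y11 /feqE y12 /feqE y21 /feqE y22.
  split.
  - by transitivity (fadd (fmul r fone) (fmul s fzero)); [fring | rewrite x21; fring].
  - by transitivity (fadd (fmul fzero q) (fmul fone s)); [fring | rewrite -y22; fring].
  - by transitivity (fadd (fmul p fone) (fmul q fzero)); [fring | rewrite x11; fring].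
  - by transitivity (fsub (fadd (fmul fone q') (fmul c s')) (fmul c s')); [fring | rewrite -x12; fring].
case=> -> -> -> ->.
rewrite /arrow /meq /mmul /Xm /Ym /=.
by split; split; apply: eqfeq; fring.
Qed.


Definition det (A : mat2) : fps := fsub (fmul (m11 A) (m22 A)) (fmul (m12 A) (m21 A)).

Lemma det_arrow A' A b c par : arrow A' A b c par -> det A' = det A.
Proof.
case: A' A => p' q' r' s' [p q r s]; case: par.
  by case/arrow_odd=> -> -> -> ->; rewrite /det /=; fring.
by case/arrow_even=> -> -> -> ->; rewrite /det /=; fring.
Qed.

Lemma inv_of_det A K : det A = fc K -> K != 0 -> minvertible A.
Proof.
case: A => p q r s /= hd hK.
have hk : fmul (fc K^-1) (fc K) = fone by rewrite fcM mulVf // fc1.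
exists (Mat2 (fmul (fc K^-1) s) (fopp (fmul (fc K^-1) q))
             (fopp (fmul (fc K^-1) r)) (fmul (fc K^-1) p)).
rewrite /meq /mmul /mid /=; move: hd; rewrite /det /= => hd.
split; split; apply: eqfeq.
- by rewrite -hk -hd; fring.
- by fring.
- by fring.
- by rewrite -hk -hd; fring.
- by rewrite -hk -hd; fring.
- by fring.
- by fring.
- by rewrite -hk -hd; fring.
Qed.

Lemma det0_of_inv A : minvertible A -> det A 0%N != 0.
Proof.
case: A => p q r s [[p2 q2 r2 s2]] [[h11 h12 h21 h22] _].
move: (h11 0%N) (h12 0%N) (h21 0%N) (h22 0%N).
rewrite /mmul /mid /det /= !fsub0 !fadd0 !fmul0 fone0 fzero0 => e11 e12 e21 e22.
have key : (p 0%N * s 0%N - q 0%N * r 0%N) * (p2 0%N * s2 0%N - q2 0%N * r2 0%N) =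
   (p 0%N * p2 0%N + q 0%N * r2 0%N) * (r 0%N * q2 0%N + s 0%N * s2 0%N)
     - (p 0%N * q2 0%N + q 0%N * s2 0%N) * (r 0%N * p2 0%N + s 0%N * r2 0%N) by ring.
rewrite e11 e12 e21 e22 mul0r subr0 mulr1 in key.
apply/eqP => h; move: key; rewrite h mul0r => /eqP; by rewrite eq_sym oner_eq0.
Qed.


Lemma eq0_lin (x y e a : CC) : x - y = a * e -> e = 0 -> x = y.
Proof. by move=> h he; apply/eqP; rewrite -subr_eq0 h he mulr0. Qed.

Lemma alg_fwd (rho S0 P0 S1 S2 S3 S4 P1 P2 P3 P4 B1 B2 B3 B4 B5 C1 C2 C3 C4 C5 : CC) :
  S1 = S0 - rho * B1 -> S2 = S1 - rho * B2 -> S3 = S2 - rho * B3 -> S4 = S3 - rho * B4 ->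
  P1 = P0 + rho * C1 -> P2 = P1 + rho * C2 -> P3 = P2 + rho * C3 -> P4 = P3 + rho * C4 ->
  B5 = - (B1 + B2 + B3 + B4) ->
  C1 * S0 - B1 * P0 - rho * B1 * C1 = 0 ->
  C2 * S1 - B2 * P1 - rho * B2 * C2 = 0 ->
  C3 * S2 - B3 * P2 - rho * B3 * C3 = 0 ->
  C4 * S3 - B4 * P3 - rho * B4 * C4 = 0 ->
  C5 * S4 - B5 * P4 - rho * B5 * C5 = 0 ->
  S0 * P0 != 0 ->
  C1 * B2 * (C3 + C4) * B5 - B1 * C2 * (B3 + B4) * C5 = 0 /\
  C1 * B2 * C3 * (B4 + B5) - B1 * C2 * B3 * (C4 + C5) = 0.
Proof.
move=> hS1 hS2 hS3 hS4 hP1 hP2 hP3 hP4 hB E1 E2 E3 E4 E5 hK.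
set K := S0 * P0.
have K1 : S1 * P1 = K by apply: (eq0_lin (a := rho) _ E1); rewrite /K hS1 hP1; ring.
have K2 : S2 * P2 = K by rewrite -K1; apply: (eq0_lin (a := rho) _ E2); rewrite hS2 hP2; ring.
have K3 : S3 * P3 = K by rewrite -K2; apply: (eq0_lin (a := rho) _ E3); rewrite hS3 hP3; ring.
have K4 : S4 * P4 = K by rewrite -K3; apply: (eq0_lin (a := rho) _ E4); rewrite hS4 hP4; ring.
have nz : forall X Y, X * Y = K -> X != 0.
  by move=> X Y h; apply/eqP => h0; move: hK; rewrite -/K -h h0 mul0r eqxx.
have nS0 : S0 != 0 by apply: (nz S0 P0).
have nS1 := nz _ _ K1; have nS2 := nz _ _ K2; have nS3 := nz _ _ K3; have nS4 := nz _ _ K4.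
have f1 : C1 * S0 * S1 = K * B1.
  by apply: (eq0_lin (a := S0) _ E1); rewrite /K hS1; ring.
have f2 : C2 * S1 * S2 = K * B2.
  by rewrite -K1; apply: (eq0_lin (a := S1) _ E2); rewrite hS2; ring.
have f3 : C3 * S2 * S3 = K * B3.
  by rewrite -K2; apply: (eq0_lin (a := S2) _ E3); rewrite hS3; ring.
have f4 : C4 * S3 * S4 = K * B4.
  by rewrite -K3; apply: (eq0_lin (a := S3) _ E4); rewrite hS4; ring.
have hS5 : S4 - rho * B5 = S0 by rewrite hS4 hS3 hS2 hS1 hB; ring.
have f5 : C5 * S4 * S0 = K * B5.
  rewrite -K4; apply: (eq0_lin (a := S4) _ E5); rewrite -hS5; ring.
have f34 : (C3 + C4) * S2 * S4 = K * (B3 + B4).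
  apply: (mulIf nS3).
  have -> : (C3 + C4) * S2 * S4 * S3 = (C3 * S2 * S3) * S4 + (C4 * S3 * S4) * S2 by ring.
  rewrite f3 f4.
  have e : B3 * S4 + B4 * S2 = S3 * (B3 + B4) by rewrite hS4 hS3; ring.
  by transitivity (K * (B3 * S4 + B4 * S2)); [ring | rewrite e; ring].
have f45 : (C4 + C5) * S3 * S0 = K * (B4 + B5).
  apply: (mulIf nS4).
  have -> : (C4 + C5) * S3 * S0 * S4 = (C4 * S3 * S4) * S0 + (C5 * S4 * S0) * S3 by ring.
  rewrite f4 f5.
  have e : B4 * S0 + B5 * S3 = S4 * (B4 + B5) by rewrite -hS5 hS4; ring.
  by transitivity (K * (B4 * S0 + B5 * S3)); [ring | rewrite e; ring].
split.
  apply: (mulIf (mulf_neq0 (mulf_neq0 (mulf_neq0 nS0 nS1) nS2) nS4)); rewrite mul0r.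
  have -> : (C1 * B2 * (C3 + C4) * B5 - B1 * C2 * (B3 + B4) * C5) * (S0 * S1 * S2 * S4)
    = (C1 * S0 * S1) * B2 * ((C3 + C4) * S2 * S4) * B5
      - B1 * (C2 * S1 * S2) * (B3 + B4) * (C5 * S4 * S0) by ring.
  by rewrite f1 f2 f34 f5; ring.
apply: (mulIf (mulf_neq0 (mulf_neq0 (mulf_neq0 nS0 nS1) nS2) nS3)); rewrite mul0r.
have -> : (C1 * B2 * C3 * (B4 + B5) - B1 * C2 * B3 * (C4 + C5)) * (S0 * S1 * S2 * S3)
  = (C1 * S0 * S1) * B2 * (C3 * S2 * S3) * (B4 + B5)
    - B1 * (C2 * S1 * S2) * B3 * ((C4 + C5) * S3 * S0) by ring.
by rewrite f1 f2 f3 f45; ring.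
Qed.

Lemma alg_bwd (B1 B2 B3 B4 B5 C1 C2 C3 C4 C5 : CC) :
  B5 = - (B1 + B2 + B3 + B4) -> C5 = - (C1 + C2 + C3 + C4) ->
  B1 != 0 -> B2 != 0 -> B5 != 0 -> C1 != 0 -> C5 != 0 ->
  B1 + B2 != 0 -> B5 + B1 != 0 -> C5 + C1 != 0 ->
  C1 * B2 * (C3 + C4) * B5 - B1 * C2 * (B3 + B4) * C5 = 0 ->
  C1 * B2 * C3 * (B4 + B5) - B1 * C2 * B3 * (C4 + C5) = 0 ->
  exists rho S0 P0 : CC, S0 * P0 != 0 /\
  let S1 := S0 - rho * B1 in let S2 := S1 - rho * B2 in
  let S3 := S2 - rho * B3 in let S4 := S3 - rho * B4 in
  let P1 := P0 + rho * C1 in let P2 := P1 + rho * C2 in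
  let P3 := P2 + rho * C3 in let P4 := P3 + rho * C4 in
  [/\ C1 * S0 - B1 * P0 - rho * B1 * C1 = 0,
      C2 * S1 - B2 * P1 - rho * B2 * C2 = 0,
      C3 * S2 - B3 * P2 - rho * B3 * C3 = 0,
      C4 * S3 - B4 * P3 - rho * B4 * C4 = 0 &
      C5 * S4 - B5 * P4 - rho * B5 * C5 = 0].
Proof.
move=> hB hC nB1 nB2 nB5 nC1 nC5 nB12 nB51 nC51 c1 c2.
exists (B1 * C5 - C1 * B5), (- (B1 * B5 * (C1 + C5))), (- (C1 * C5 * (B1 + B5))).
split.
  rewrite mulrNN !mulf_neq0 //; first by rewrite addrC.
  by rewrite addrC.
set rho := B1 * C5 - C1 * B5.
set S0 := - (B1 * B5 * (C1 + C5)).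
set P0 := - (C1 * C5 * (B1 + B5)).
move=> S1 S2 S3 S4 P1 P2 P3 P4.
set L1 := C1 * S0 - B1 * P0 - rho * B1 * C1.
set L2 := C2 * S1 - B2 * P1 - rho * B2 * C2.
set L3 := C3 * S2 - B3 * P2 - rho * B3 * C3.
set L4 := C4 * S3 - B4 * P3 - rho * B4 * C4.
set L5 := C5 * S4 - B5 * P4 - rho * B5 * C5.
have E1 : L1 = 0 by rewrite /L1 /S0 /P0 /rho; ring.
have E5 : L5 = 0.
  rewrite /L5 /S4 /S3 /S2 /S1 /P4 /P3 /P2 /P1 /S0 /P0 /rho.
  move: hB hC => -> ->; ring.
have E2 : L2 = 0.
  apply: (eq0_lin (a := -1) _ c1); rewrite /L2 /S1 /P1 /S0 /P0 /rho.
  move: hB hC => -> ->; ring.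
have sumL : L1 + L2 + L3 + L4 + L5 = 0.
  rewrite /L1 /L2 /L3 /L4 /L5 /S4 /S3 /S2 /S1 /P4 /P3 /P2 /P1.
  move: hB hC => -> ->; ring.
have idc2 : (C1 * B2 * C3 * (B4 + B5) - B1 * C2 * B3 * (C4 + C5)) * (S0 * S1 * S2) =
   - (S0 * P0) * B1 * B2 * (B1 + B2) * L3 + (S0 * P0) * B1 * B2 * B3 * (L1 + L2)
   + S0 * S2 * B2 * C3 * (B4 + B5) * L1
   - B1 * B3 * S0 * (C4 + C5) * (rho * B2 * L1 + S1 * L2).
  rewrite /L1 /L2 /L3 /S2 /S1 /P2 /P1.
  move: hB hC => -> ->; ring.
have E3 : L3 = 0.
  move: idc2; rewrite c2 E1 E2 ?mul0r ?mulr0 ?addr0 ?subr0 ?add0r ?mulr0 ?addr0 ?subr0.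
  have nz : B1 * B5 * (C1 + C5) * P0 * B1 * B2 * (B1 + B2) != 0.
    rewrite !mulf_neq0 // ?(addrC C1) //.
    by rewrite /P0 oppr_eq0 !mulf_neq0 // addrC.
  rewrite !mulNr => /eqP; rewrite eq_sym !oppr_eq0 mulf_eq0 (negbTE nz) /=.
  by move/eqP.
have E4 : L4 = 0 by move: sumL; rewrite E1 E2 E3 E5 !add0r addr0.
by split.
Qed.


Lemma ix_facts k : (0 < k <= 10)%N ->
  ord_pred (ix k) = ix k.-1 /\ odd (ix k) = odd k.
Proof.
case/andP; case: k => [//|]; do 10! (case=> [_ _|]; first by split; [apply: val_inj|]).
by [].
Qed.

Lemma ord_facts (j : 'I_10) :
  let k := if val j == 0%N then 10%N else val j in
  [/\ (0 < k <= 10)%N, ix k = j & val (ord_pred j) = k.-1].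
Proof.
case: j => m hm; do 10! (case: m hm => [hm|m hm]; first by split => //; apply: val_inj).
by [].
Qed.

Lemma ix10 : ix 10 = ix 0.
Proof. by apply: val_inj. Qed.

Lemma Miso_nat b c : Miso b c <->
  exists A : nat -> mat2, (forall v, (v < 10)%N -> minvertible (A v)) /\ A 10%N = A 0%N /\
    (forall k, (0 < k <= 10)%N -> arrow (A k.-1) (A k) (b (ix k)) (c (ix k)) (odd k)).
Proof.
split.
  case=> phi [hinv harr]; exists (fun v => phi (ix v)); split; [by move=> v _ | split].
    by rewrite ix10.
  move=> k hk; have [hp ho] := ix_facts hk.
  have [h1 h2] := harr (ix k); rewrite /arrow -ho -hp; split; [exact: h1 | exact: h2].
case=> A [hinv [h10 harr]]; exists (fun j => A (val j)); split.
  by move=> j; apply: hinv (ltn_ord j).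
move=> j; have [hk hj hp] := ord_facts j.
set k := (if val j == 0%N then 10%N else val j) in hk hj hp.
have hA : A (val j) = A k.
  by rewrite /k; case: eqP => [->|//]; rewrite h10.
have [_ ho] := ix_facts hk.
have := harr k hk; rewrite /arrow => -[h1 h2].
rewrite !xmatE !ymatE hp hA -hj ho; split; [exact: h1 | exact: h2].
Qed.


Lemma pair_consts A0 A1 A2 b1 c1 b2 c2 :
  arrow A0 A1 b1 c1 true -> arrow A1 A2 b2 c2 false ->
  let rho := m21 A1 0%N in let S := m22 A0 0%N in let P := m11 A0 0%N in
  let B := b1 0%N + b2 0%N in let C := c1 0%N + c2 0%N in
  [/\ m21 A0 0%N = 0, m21 A2 0%N = 0, m21 A0 1%N = rho, m21 A2 1%N = rho &
      [/\ m22 A2 0%N = S - rho * B, m11 A2 0%N = P + rho * C &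
      C * S - B * P - rho * B * C = 0]].
Proof.
case: A0 A1 A2 => p0 q0 r0 s0 [p1 q1 r1 s1] [p2 q2 r2 s2] /=.
case/arrow_odd => -> -> -> ->.
case/arrow_even => -> -> -> /(congr1 (fun f : fps => f 0%N)).
rewrite ?fsub0 ?fadd0 ?fmul0 ?fsub0 ?fadd0 ?fmul0 ?fsub0 ?fadd0 ?fmul0 ?ft0 !mul0r !add0r => /eqP; rewrite -subr_eq0 => /eqP E.
split => //.
- by rewrite ftS.
- by rewrite ftS.
split; [ring | ring |].
apply: (eq0_lin (a := 1) _ E); ring.
Qed.

Lemma sumB (b : 'I_10 -> fps) : sum_zero b ->
  b (ix 9) 0%N + b (ix 10) 0%N = - ((b (ix 1) 0%N + b (ix 2) 0%N) + (b (ix 3) 0%N + b (ix 4) 0%N)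
     + (b (ix 5) 0%N + b (ix 6) 0%N) + (b (ix 7) 0%N + b (ix 8) 0%N)).
Proof.
move=> /(_ 0%N); rewrite (sum10 (fun i => b i 0%N)) ix10 => h.
apply/eqP; rewrite -subr_eq0 opprK -[X in _ == X]h; apply/eqP; ring.
Qed.

Lemma fwd b c : sum_zero b -> sum_zero c -> Miso b c ->
  let B1 := b (ix 1) 0%N + b (ix 2) 0%N in let B2 := b (ix 3) 0%N + b (ix 4) 0%N in
  let B3 := b (ix 5) 0%N + b (ix 6) 0%N in let B4 := b (ix 7) 0%N + b (ix 8) 0%N in
  let B5 := b (ix 9) 0%N + b (ix 10) 0%N in
  let C1 := c (ix 1) 0%N + c (ix 2) 0%N in let C2 := c (ix 3) 0%N + c (ix 4) 0%N in
  let C3 := c (ix 5) 0%N + c (ix 6) 0%N in let C4 := c (ix 7) 0%N + c (ix 8) 0%N in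
  let C5 := c (ix 9) 0%N + c (ix 10) 0%N in
  C1 * B2 * (C3 + C4) * B5 - B1 * C2 * (B3 + B4) * C5 = 0 /\
  C1 * B2 * C3 * (B4 + B5) - B1 * C2 * B3 * (C4 + C5) = 0.
Proof.
move=> sb sc /Miso_nat [A [hinv [h10 harr]]] B1 B2 B3 B4 B5 C1 C2 C3 C4 C5.
have [r00 _ _ r21 [hS1 hP1 E1]] := pair_consts (harr 1%N isT) (harr 2%N isT).
have [_ _ r21' r41 [hS2 hP2 E2]] := pair_consts (harr 3%N isT) (harr 4%N isT).
have [_ _ r41' r61 [hS3 hP3 E3]] := pair_consts (harr 5%N isT) (harr 6%N isT).
have [_ _ r61' r81 [hS4 hP4 E4]] := pair_consts (harr 7%N isT) (harr 8%N isT).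
have [_ _ r81' _ [_ _ E5]] := pair_consts (harr 9%N isT) (harr 10%N isT).
move: r00 r21 hS1 hP1 E1 r21' r41 hS2 hP2 E2 r41' r61 hS3 hP3 E3 r61' r81 hS4 hP4 E4 r81' E5 => /=.
move=> r00 r21 hS1 hP1 E1 r21' r41 hS2 hP2 E2 r41' r61 hS3 hP3 E3 r61' r81 hS4 hP4 E4 r81' E5.
have e3 : m21 (A 3%N) 0%N = m21 (A 1%N) 0%N by rewrite -r21' r21.
have e5 : m21 (A 5%N) 0%N = m21 (A 1%N) 0%N by rewrite -r41' r41 e3.
have e7 : m21 (A 7%N) 0%N = m21 (A 1%N) 0%N by rewrite -r61' r61 e5.
have e9 : m21 (A 9%N) 0%N = m21 (A 1%N) 0%N by rewrite -r81' r81 e7.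
rewrite e3 in hS2 hP2 E2; rewrite e5 in hS3 hP3 E3; rewrite e7 in hS4 hP4 E4; rewrite e9 in E5.
have hK : m22 (A 0%N) 0%N * m11 (A 0%N) 0%N != 0.
  have := det0_of_inv (hinv 0%N isT); rewrite /det fsub0 !fmul0 r00 mulr0 subr0 mulrC //.
exact: (alg_fwd hS1 hS2 hS3 hS4 hP1 hP2 hP3 hP4 (sumB sb) E1 E2 E3 E4 E5 hK).
Qed.


Fixpoint fsum (f : nat -> fps) (m : nat) : fps :=
  match m with 0 => fzero | m'.+1 => fadd (fsum f m') (f m) end.


Definition sv (b : 'I_10 -> fps) (rho S0 : CC) (v : nat) : fps :=
  fsub (fc S0) (fmul (fc rho) (fsum (fun k => b (ix k)) v)).
Definition pv (c : 'I_10 -> fps) (rho P0 : CC) (v : nat) : fps :=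
  fadd (fc P0) (fmul (fc rho) (fsum (fun k => c (ix k)) v)).
Definition rv (rho : CC) (v : nat) : fps := if odd v then fc rho else fmul ft (fc rho).
Definition dd b c rho S0 P0 (k : nat) : fps :=
  fsub (fmul (c (ix k)) (sv b rho S0 k.-1)) (fmul (b (ix k)) (pv c rho P0 k)).
Definition Dv b c rho S0 P0 (m : nat) : fps := fsum (dd b c rho S0 P0) m.
Definition qv b c rho S0 P0 (v : nat) : fps :=
  if odd v then Dv b c rho S0 P0 v else fdivt (Dv b c rho S0 P0 v).
Definition Av b c rho S0 P0 (v : nat) : mat2 :=
  Mat2 (pv c rho P0 v) (qv b c rho S0 P0 v) (rv rho v) (sv b rho S0 v).

Lemma arrow_odd_k b c rho S0 P0 k : odd k ->
  Dv b c rho S0 P0 k.-1 0%N = 0 ->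
  arrow (Av b c rho S0 P0 k.-1) (Av b c rho S0 P0 k) (b (ix k)) (c (ix k)) true.
Proof.
case: k => [//|k] ho hD; apply/arrow_odd.
have ho' : odd k = false by move: ho => /=; case: (odd k).
rewrite /qv /rv /= ho'; split.
- by [].
- by rewrite /sv /=; fring.
- by rewrite /pv /=; fring.
- by rewrite fdivtK // /Dv /= /dd /=; fring.
Qed.

Lemma arrow_even_k b c rho S0 P0 k : (0 < k)%N -> ~~ odd k ->
  Dv b c rho S0 P0 k 0%N = 0 ->
  arrow (Av b c rho S0 P0 k.-1) (Av b c rho S0 P0 k) (b (ix k)) (c (ix k)) false.
Proof.
case: k => [//|k] _ ho hD; apply/arrow_even.
have ho' : odd k = true by move: ho => /=; case: (odd k).
rewrite /qv /rv /= ho'; split.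
- by [].
- by rewrite /sv /=; fring.
- by rewrite /pv /=; fring.
- by rewrite fdivtK // /Dv /= /dd /=; fring.
Qed.

Lemma fsum10 (f : 'I_10 -> fps) : sum_zero f -> fsum (fun k => f (ix k)) 10 = fzero.
Proof.
move=> h; apply: feqE => n; move: (h n); rewrite sum10 => h'.
rewrite /fzero -h' /= /fadd /fzero ix10; ring.
Qed.

Lemma Dv10 b c rho S0 P0 : Dv b c rho S0 P0 10 =
  fsub (fmul (fc S0) (fsum (fun k => c (ix k)) 10))
       (fadd (fmul (fc P0) (fsum (fun k => b (ix k)) 10))
             (fmul (fc rho) (fmul (fsum (fun k => b (ix k)) 10) (fsum (fun k => c (ix k)) 10)))).
Proof. rewrite /Dv /dd /sv /pv /=; fring. Qed.

Lemma sum4_0 (x e1 e2 e3 e4 : CC) : e1 = 0 -> e2 = 0 -> e3 = 0 -> e4 = 0 ->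
  x - (e1 + e2 + e3 + e4) = 0 -> x = 0.
Proof. by move=> -> -> -> ->; rewrite !addr0 subr0. Qed.

Ltac ev0 := repeat progress rewrite ?fsub0 ?fadd0 ?fmul0 ?fc0' ?fzero0 ?fopp0.

Lemma bwd b c rho S0 P0 : sum_zero b -> sum_zero c -> S0 * P0 != 0 ->
  let B1 := b (ix 1) 0%N + b (ix 2) 0%N in let B2 := b (ix 3) 0%N + b (ix 4) 0%N in
  let B3 := b (ix 5) 0%N + b (ix 6) 0%N in let B4 := b (ix 7) 0%N + b (ix 8) 0%N in
  let B5 := b (ix 9) 0%N + b (ix 10) 0%N in
  let C1 := c (ix 1) 0%N + c (ix 2) 0%N in let C2 := c (ix 3) 0%N + c (ix 4) 0%N in
  let C3 := c (ix 5) 0%N + c (ix 6) 0%N in let C4 := c (ix 7) 0%N + c (ix 8) 0%N in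
  let C5 := c (ix 9) 0%N + c (ix 10) 0%N in
  let S1 := S0 - rho * B1 in let S2 := S1 - rho * B2 in
  let S3 := S2 - rho * B3 in let S4 := S3 - rho * B4 in
  let P1 := P0 + rho * C1 in let P2 := P1 + rho * C2 in
  let P3 := P2 + rho * C3 in let P4 := P3 + rho * C4 in
  C1 * S0 - B1 * P0 - rho * B1 * C1 = 0 ->
  C2 * S1 - B2 * P1 - rho * B2 * C2 = 0 ->
  C3 * S2 - B3 * P2 - rho * B3 * C3 = 0 ->
  C4 * S3 - B4 * P3 - rho * B4 * C4 = 0 ->
  Miso b c.
Proof.
move=> sb sc hK B1 B2 B3 B4 B5 C1 C2 C3 C4 C5 S1 S2 S3 S4 P1 P2 P3 P4 E1 E2 E3 E4.
have z : (0 : CC) = 0 by [].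
have hD2 : Dv b c rho S0 P0 2 0%N = 0.
  apply: (sum4_0 E1 z z z); rewrite /Dv /dd /sv /pv /=; ev0.
  rewrite /B1 /C1; ring.
have hD4 : Dv b c rho S0 P0 4 0%N = 0.
  apply: (sum4_0 E1 E2 z z); rewrite /Dv /dd /sv /pv /=; ev0.
  rewrite /S1 /P1 /B1 /C1 /B2 /C2; ring.
have hD6 : Dv b c rho S0 P0 6 0%N = 0.
  apply: (sum4_0 E1 E2 E3 z); rewrite /Dv /dd /sv /pv /=; ev0.
  rewrite /S2 /P2 /S1 /P1 /B1 /C1 /B2 /C2 /B3 /C3; ring.
have hD8 : Dv b c rho S0 P0 8 0%N = 0.
  apply: (sum4_0 E1 E2 E3 E4); rewrite /Dv /dd /sv /pv /=; ev0.
  rewrite /S3 /P3 /S2 /P2 /S1 /P1 /B1 /C1 /B2 /C2 /B3 /C3 /B4 /C4; ring.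
have hD10 : Dv b c rho S0 P0 10 = fzero.
  by rewrite Dv10 (fsum10 sb) (fsum10 sc); fring.
have hD0 : Dv b c rho S0 P0 0 0%N = 0 by [].
have harr : forall k, (0 < k <= 10)%N ->
    arrow (Av b c rho S0 P0 k.-1) (Av b c rho S0 P0 k) (b (ix k)) (c (ix k)) (odd k).
  move=> k /andP[k0 k10].
  case: k k0 k10 => [//|[|[|[|[|[|[|[|[|[|[|//]]]]]]]]]]] _ _.
  - exact: (arrow_odd_k (k := 1) isT hD0).
  - exact: (arrow_even_k (k := 2) isT isT hD2).
  - exact: (arrow_odd_k (k := 3) isT hD2).
  - exact: (arrow_even_k (k := 4) isT isT hD4).
  - exact: (arrow_odd_k (k := 5) isT hD4).
  - exact: (arrow_even_k (k := 6) isT isT hD6).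
  - exact: (arrow_odd_k (k := 7) isT hD6).
  - exact: (arrow_even_k (k := 8) isT isT hD8).
  - exact: (arrow_odd_k (k := 9) isT hD8).
  - by apply: (arrow_even_k (k := 10) isT isT); rewrite hD10.
have hdet0 : det (Av b c rho S0 P0 0) = fc (P0 * S0).
  have ez : fdivt fzero = fzero by apply: feqE.
  rewrite -fcM /det /Av /= /qv /= (_ : Dv b c rho S0 P0 0 = fzero) // ez /pv /sv /rv /=.
  fring.
have d : forall k, (0 < k <= 10)%N -> det (Av b c rho S0 P0 k) = det (Av b c rho S0 P0 k.-1).
  by move=> k hk; rewrite (det_arrow (harr k hk)).
have hdet : forall v, (v < 10)%N -> det (Av b c rho S0 P0 v) = fc (P0 * S0).
  elim=> [|v IH] hv; first exact: hdet0.
  have hv' : (0 < v.+1 <= 10)%N by rewrite /= ltnW.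
  by rewrite (d _ hv') IH // ltnW.
apply/Miso_nat; exists (Av b c rho S0 P0); split.
  move=> v hv; apply: (inv_of_det (hdet v hv)).
  by rewrite mulrC.
split; last exact: harr.
rewrite /Av /pv /sv /qv (fsum10 sb) (fsum10 sc) hD10.
reflexivity.
Qed.


Lemma BsumE (f : 'I_10 -> fps) k : (k < 10)%N ->
  Bsum f (ix k) 0%N = f (ix k) 0%N + f (ix k.+1) 0%N.
Proof.
move=> hk; rewrite /Bsum fadd0 (_ : ordS (ix k) = ix k.+1) //.
apply: val_inj; move: hk.
by do 10! (case: k => [//|k]).
Qed.

Lemma ordSS9 : ordS (ordS (ix 9)) = ix 1.
Proof. by apply: val_inj. Qed.
Lemma ordSS1 : ordS (ordS (ix 1)) = ix 3.
Proof. by apply: val_inj. Qed.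

Lemma ntd (a : fps) : ~ tdvd a -> a 0%N != 0.
Proof. by move=> h; apply/eqP => h0; apply: h; apply/tdvdP. Qed.

Lemma main_aux (b c : 'I_10 -> fps) :
  sum_zero b -> sum_zero c ->
  (forall i : 'I_10, odd i ->
     [/\ ~ tdvd (Bsum b i), ~ tdvd (Bsum c i),
         ~ tdvd (fadd (Bsum b i) (Bsum b (ordS (ordS i))))
       & ~ tdvd (fadd (Bsum c i) (Bsum c (ordS (ordS i))))]) ->
  (Miso b c <->
   (tdvd (fadd
      (fmul (fmul (fmul (Bsum c (ix 1)) (Bsum b (ix 3)))
                  (fadd (Bsum c (ix 5)) (Bsum c (ix 7)))) (Bsum b (ix 9)))
      (fopp (fmul (fmul (fmul (Bsum b (ix 1)) (Bsum c (ix 3)))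
                  (fadd (Bsum b (ix 5)) (Bsum b (ix 7)))) (Bsum c (ix 9)))))
    /\
    tdvd (fadd
      (fmul (fmul (fmul (Bsum c (ix 1)) (Bsum b (ix 3))) (Bsum c (ix 5)))
            (fadd (Bsum b (ix 7)) (Bsum b (ix 9))))
      (fopp (fmul (fmul (fmul (Bsum b (ix 1)) (Bsum c (ix 3))) (Bsum b (ix 5)))
            (fadd (Bsum c (ix 7)) (Bsum c (ix 9)))))))).
Proof.
move=> sb sc hnd.
rewrite !tdvdP; ev0; rewrite !BsumE //.
split.
  by move=> hM; have [h1 h2] := fwd sb sc hM; split.
case=> c1 c2.
have [nB1 nC1 nB13 nC13] := hnd (ix 1) isT.
have [nB3 _ _ _] := hnd (ix 3) isT.
have [nB9 nC9 nB91 nC91] := hnd (ix 9) isT.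
rewrite ordSS1 in nB13 nC13; rewrite ordSS9 in nB91 nC91.
move: nB1 nC1 nB13 nC13 nB3 nB9 nC9 nB91 nC91.
move=> /ntd nB1 /ntd nC1 /ntd nB13 /ntd nC13 /ntd nB3 /ntd nB9 /ntd nC9 /ntd nB91 /ntd nC91.
move: nB1 nC1 nB13 nC13 nB3 nB9 nC9 nB91 nC91; rewrite ?fadd0 !BsumE //.
move=> nB1 nC1 nB13 nC13 nB3 nB9 nC9 nB91 nC91.
have [rho [S0 [P0 [hK [E1 E2 E3 E4 _]]]]] :=
  alg_bwd (sumB sb) (sumB sc) nB1 nB3 nB9 nC1 nC9 nB13 nB91 nC91 c1 c2.
exact: (bwd sb sc hK E1 E2 E3 E4).
Qed.

Local Close Scope ring_scope.
Unset Implicit Arguments.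

Theorem theorem2p10 (b c : 'I_10 -> fps) :
  sum_zero b -> sum_zero c ->
  (forall i : 'I_10, odd i ->
     [/\ ~ tdvd (Bsum b i), ~ tdvd (Bsum c i),
         ~ tdvd (fadd (Bsum b i) (Bsum b (ordS (ordS i))))
       & ~ tdvd (fadd (Bsum c i) (Bsum c (ordS (ordS i))))]) ->
  (Miso b c <->
   (tdvd (fadd
      (fmul (fmul (fmul (Bsum c (ix 1)) (Bsum b (ix 3)))
                  (fadd (Bsum c (ix 5)) (Bsum c (ix 7)))) (Bsum b (ix 9)))
      (fopp (fmul (fmul (fmul (Bsum b (ix 1)) (Bsum c (ix 3)))
                  (fadd (Bsum b (ix 5)) (Bsum b (ix 7)))) (Bsum c (ix 9)))))
    /\
    tdvd (fadd
      (fmul (fmul (fmul (Bsum c (ix 1)) (Bsum b (ix 3))) (Bsum c (ix 5)))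
            (fadd (Bsum b (ix 7)) (Bsum b (ix 9))))
      (fopp (fmul (fmul (fmul (Bsum b (ix 1)) (Bsum c (ix 3))) (Bsum b (ix 5)))
            (fadd (Bsum c (ix 7)) (Bsum c (ix 9)))))))).
Proof.
exact: main_aux.
Qed.
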